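(* Let $q$ be a prime power, $2\le n\le m$, and let $\mathcal{C}_1,\mathcal{C}_2\subseteq\mathrm{Mat}$ be rank-metric codes with $\mathcal{C}_1\sim\mathcal{C}_2$. If $m>n$, then $P(\mathcal{C}_1,\mathrm c)\sim P(\mathcal{C}_2,\mathrm c)$ and $P(\mathcal{C}_1,\mathrm r)\sim P(\mathcal{C}_2,\mathrm r)$. If $n=m$, then either $P(\mathcal{C}_1,\mathrm c)\sim P(\mathcal{C}_2,\mathrm c)$ and $P(\mathcal{C}_1,\mathrm r)\sim P(\mathcal{C}_2,\mathrm r)$, or $P(\mathcal{C}_1,\mathrm c)\sim P(\mathcal{C}_2,\mathrm r)$ and $P(\mathcal{C}_1,\mathrm r)\sim P(\mathcal{C}_2,\mathrm c)$.
   Context: $\mathrm{Mat}$ is the $\mathbb{F}_q$-space of $n\times m$ matrices over $\mathbb{F}_q$; a rank-metric code is an $\mathbb{F}_q$-linear subspace. Codes are equivalent ($\mathcal{C}_1\sim\mathcal{C}_2$) if there is an $\mathbb{F}_q$-linear isometry $f:\mathrm{Mat}\to\mathrm{Mat}$ for the rank metric $d(M,N)=\mathrm{rk}(M-N)$ with $f(\mathcal{C}_1)=\mathcal{C}_2$. For subspaces $J\subseteq\mathbb{F}_q^n$, $K\subseteq\mathbb{F}_q^m$: $\mathcal{C}(J,\mathrm c)=\{M\in\mathcal{C}\mid\mathrm{colsp}(M)\subseteq J\}$, $\mathcal{C}(K,\mathrm r)=\{M\in\mathcal{C}\mid\mathrm{rowsp}(M)\subseteq K\}$, $\rho_{\mathrm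 c}(\mathcal{C},J)=(\dim\mathcal{C}-\dim\mathcal{C}(J^\perp,\mathrm c))/m$, $\rho_{\mathrm r}(\mathcal{C},K)=(\dim\mathcal{C}-\dim\mathcal{C}(K^\perp,\mathrm r))/n$ ($\perp$ for the standard inner product). $P(\mathcal{C},\mathrm c)=(\mathbb{F}_q^n,\rho_{\mathrm c}(\mathcal{C},\cdot))$ and $P(\mathcal{C},\mathrm r)=(\mathbb{F}_q^m,\rho_{\mathrm r}(\mathcal{C},\cdot))$ (these are $q$-polymatroids). Two pairs $(\mathbb{F}_q^N,\rho_1)$, $(\mathbb{F}_q^N,\rho_2)$ are equivalent ($\sim$) if there is an $\mathbb{F}_q$-linear isomorphism $\varphi:\mathbb{F}_q^N\to\mathbb{F}_q^N$ with $\rho_1(A)=\rho_2(\varphi(A))$ for all subspaces $A$. *)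

(* Defs.v *)
From HB Require Import structures.
From mathcomp Require Import all_boot all_order all_algebra all_fingroup all_field.
Set Implicit Arguments. Unset Strict Implicit. Unset Printing Implicit Defensive.
Import GRing.Theory Num.Theory.
Local Open Scope ring_scope.

(* F is the finite field F_q (q = #|F| is automatically a prime power).
   Mat = 'M[F]_(n, m); F^N = 'rV[F]_N; subspaces are {vspace _}. *)

Section Defs.
Variable F : finFieldType.

(* subspace of a finite vector type cut out by a boolean predicate
   (used only for predicates defining subspaces) *)
Definition subsp_of (vT : vectType F) (T : finType) (f : T -> vT) (P : pred T)
  : {vspace vT} := (<< [seq f x | x <- enum T & P x] >>)%VS.

Definition dotv N (x y : 'rV[F]_N) : F := \sum_(i < N) x 0 i * y 0 i.
Definition perp N (J : {vspace 'rV[F]_N}) : {vspace 'rV[F]_N} :=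
  subsp_of (@id 'rV[F]_N) (fun x => [forall y : 'rV[F]_N, (y \in J) ==> (dotv x y == 0)]).

Variables n m : nat.

Definition colsp_sub (M : 'M[F]_(n, m)) (J : {vspace 'rV[F]_n}) : bool :=
  [forall j : 'I_m, (col j M)^T \in J].
Definition rowsp_sub (M : 'M[F]_(n, m)) (K : {vspace 'rV[F]_m}) : bool :=
  [forall i : 'I_n, row i M \in K].

Definition subcode_c (C : {vspace 'M[F]_(n, m)}) (J : {vspace 'rV[F]_n}) :=
  subsp_of (@id 'M[F]_(n, m)) (fun M => (M \in C) && colsp_sub M J).
Definition subcode_r (C : {vspace 'M[F]_(n, m)}) (K : {vspace 'rV[F]_m}) :=
  subsp_of (@id 'M[F]_(n, m)) (fun M => (M \in C) && rowsp_sub M K).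

(* rank functions of P(C, c) and P(C, r) *)
Definition rho_c (C : {vspace 'M[F]_(n, m)}) (J : {vspace 'rV[F]_n}) : rat :=
  ((\dim C)%:R - (\dim (subcode_c C (perp J)))%:R) / m%:R.
Definition rho_r (C : {vspace 'M[F]_(n, m)}) (K : {vspace 'rV[F]_m}) : rat :=
  ((\dim C)%:R - (\dim (subcode_r C (perp K)))%:R) / n%:R.

Definition code_equiv (C1 C2 : {vspace 'M[F]_(n, m)}) : Prop :=
  exists f : {linear 'M[F]_(n, m) -> 'M[F]_(n, m)},
    (forall M N : 'M[F]_(n, m), \rank (f M - f N) = \rank (M - N)) /\
    (linfun f @: C1)%VS = C2.
End Defs.

(* equivalence of pairs (F^N1, rho1), (F^N2, rho2): an F-linear isomorphism
   phi with rho1 A = rho2 (phi A) for all subspaces A (this forces N1 = N2;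
   the two dimensions are kept separate only so that P(C,c) and P(C,r) can be
   compared when n = m without casts) *)
Definition pm_equiv (F : finFieldType) (N1 N2 : nat)
  (rho1 : {vspace 'rV[F]_N1} -> rat) (rho2 : {vspace 'rV[F]_N2} -> rat) : Prop :=
  exists phi : {linear 'rV[F]_N1 -> 'rV[F]_N2},
    bijective phi /\ forall A : {vspace 'rV[F]_N1}, rho1 A = rho2 (linfun phi @: A)%VS.

(* Main.v *)
Require Import Defs.
From HB Require Import structures.
From mathcomp Require Import all_boot all_order all_algebra all_fingroup all_field.
Set Implicit Arguments. Unset Strict Implicit. Unset Printing Implicit Defensive.
Import GRing.Theory Num.Theory.
Local Open Scope ring_scope.

Definition islin (F : fieldType) (U V : lmodType F) (g : U -> V) :=
  forall (a : F) x y, g (a *: x + y) = a *: g x + g y.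

Lemma islin0 (F : fieldType) (U V : lmodType F) (g : U -> V) : islin g -> g 0 = 0.
Proof. move=> h; have := h 1 0 0; rewrite scaler0 add0r scale1r => e.
by apply: (addrI (g 0)); rewrite addr0 -e. Qed.
Lemma islinD (F : fieldType) (U V : lmodType F) (g : U -> V) : islin g -> forall x y, g (x + y) = g x + g y.
Proof. by move=> h x y; have := h 1 x y; rewrite !scale1r. Qed.
Lemma islinZ (F : fieldType) (U V : lmodType F) (g : U -> V) : islin g -> forall a x, g (a *: x) = a *: g x.
Proof. by move=> h a x; have := h a x 0; rewrite !addr0 (islin0 h) addr0. Qed.
Lemma islinN (F : fieldType) (U V : lmodType F) (g : U -> V) : islin g -> forall x, g (- x) = - g x.
Proof. by move=> h x; rewrite -scaleN1r (islinZ h) scaleN1r. Qed.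
Lemma islin_sum (F : fieldType) (U V : lmodType F) (g : U -> V) : islin g ->
  forall (I : finType) (P : pred I) (G : I -> U), g (\sum_(i | P i) G i) = \sum_(i | P i) g (G i).
Proof. move=> h I P G; apply: (big_morph g (islinD h) (islin0 h)). Qed.

Lemma row_freeK (F : fieldType) k n (A : 'M[F]_(k, n)) :
  (forall v : 'rV_k, v *m A = 0 -> v = 0) -> row_free A.
Proof.
move=> h; rewrite -kermx_eq0; apply/rowV0P => v /sub_kermxP; exact: h.
Qed.

Lemma line_sub (F : fieldType) k n (X : 'M[F]_(k, n)) (p : 'rV_n) :
  X != 0 -> (X <= p)%MS -> (p <= X)%MS.
Proof.
move=> X0 Xp; rewrite -(mxrank_leqif_sup Xp).2 eqn_leq mxrankS //=.
by apply: leq_trans (rank_leq_row p) _; rewrite lt0n mxrank_eq0.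
Qed.

Lemma rank1_factor (F : fieldType) n m (Y : 'M[F]_(n, m)) :
  \rank Y = 1%N -> exists (c : 'rV_n) (d : 'rV_m), Y = c^T *m d.
Proof.
move=> r1; have := mulmx_base Y; move: (col_base Y) (row_base Y).
rewrite r1 => A B e; exists A^T, B; by rewrite trmxK.
Qed.

Lemma row_free2 (F : fieldType) n (a c : 'rV[F]_n) :
  a != 0 -> ~~ (c <= a)%MS -> row_free (col_mx a c).
Proof.
move=> a0 ca; apply: row_freeK => v.
rewrite -[v]hsubmxK mul_row_col (mx11_scalar (lsubmx v)) (mx11_scalar (rsubmx v)).
rewrite !mul_scalar_mx.
set v1 := lsubmx v 0 0; set v2 := rsubmx v 0 0 => e.
have [v20|v2n0] := eqVneq v2 0.
  move: e; rewrite v20 scale0r addr0 => /eqP; rewrite scalemx_eq0 (negbTE a0) orbF.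
  move/eqP => v10; rewrite v10 (_ : (0:F)%:M = 0) ?row_mx0 //.
  by apply/matrixP => i j; rewrite !mxE mul0rn.
exfalso; move/negP: ca; apply.
have e2 : v2 *: c = - (v1 *: a) by apply/eqP; rewrite -addr_eq0 addrC e.
by rewrite -(eqmx_scale c v2n0) e2 eqmx_opp scalemx_sub.
Qed.

Lemma rank1_sum (F : fieldType) n m (a : 'rV[F]_n) (b : 'rV[F]_m) (Y : 'M[F]_(n,m)) :
  a != 0 -> b != 0 -> (\rank Y <= 1)%N -> (\rank (a^T *m b + Y)%R <= 1)%N ->
  (Y^T <= a)%MS || (Y <= b)%MS.
Proof.
move=> a0 b0 rY rS.
have [->|Y0] := eqVneq Y 0; first by rewrite trmx0 sub0mx.
have /rank1_factor [c [d eY]] : \rank Y = 1%N.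
  by apply/eqP; rewrite eqn_leq rY lt0n mxrank_eq0.
case ca: (c <= a)%MS.
  by rewrite eY trmx_mul trmxK (submx_trans (submxMl _ _) ca).
case db: (d <= b)%MS.
  by rewrite eY (submx_trans (submxMl _ _) db) orbT.
exfalso; move: rS.
have -> : a^T *m b + Y = (col_mx a c)^T *m col_mx b d.
  by rewrite tr_col_mx mul_row_col eY.
rewrite mxrankMfree ?row_free2 ?ca ?db // mxrank_tr.
by have /eqP -> := row_free2 a0 (negbT ca).
Qed.

Lemma rank1_family (F : finFieldType) k n m (g : 'rV[F]_k -> 'M[F]_(n,m)) (x0 : 'rV_k) :
  (forall x y, g (x + y) = g x + g y) -> (forall x, \rank (g x) <= 1)%N -> g x0 != 0 ->
  (exists2 a : 'rV_n, a != 0 & forall x, ((g x)^T <= a)%MS) \/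
  (exists2 b : 'rV_m, b != 0 & forall x, (g x <= b)%MS).
Proof.
move=> gD gr gx0.
have /rank1_factor [a [b eab]] : \rank (g x0) = 1%N.
  by apply/eqP; rewrite eqn_leq gr lt0n mxrank_eq0.
have a0 : a != 0 by apply: contraNneq gx0 => a0; rewrite eab a0 trmx0 mul0mx.
have b0 : b != 0 by apply: contraNneq gx0 => b0; rewrite eab b0 mulmx0.
have key x : ((g x)^T <= a)%MS || (g x <= b)%MS.
  by apply: rank1_sum => //; rewrite -eab -gD.
case: (boolP [forall x, ((g x)^T <= a)%MS]) => [/forallP h|/forallPn [z hz]].
  by left; exists a.
case: (boolP [forall x, (g x <= b)%MS]) => [/forallP h|/forallPn [y hy]].
  by right; exists b.
exfalso.
have gz : (g z <= b)%MS by move: (key z); rewrite (negbTE hz).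
have gy : ((g y)^T <= a)%MS by move: (key y); rewrite (negbTE hy) orbF.
case/orP: (key (y + z)); rewrite gD.
  rewrite linearD /= => h; move/negP: hz; apply.
  by rewrite -[(g z)^T](addKr (g y)^T) addmx_sub // eqmx_opp.
move=> h; move/negP: hy; apply.
by rewrite -[g y](addrK (g z)) addmx_sub // eqmx_opp.
Qed.

Lemma nz_entry (F : fieldType) m (b : 'rV[F]_m) : b != 0 -> exists j, b 0 j != 0.
Proof.
move=> b0; apply/existsP; apply: contraNT b0 => /existsPn h.
apply/eqP/matrixP => i j; rewrite ord1 mxE; apply/eqP; move: (h j); by rewrite negbK.
Qed.

Lemma linmx (F : fieldType) k p (phi : 'rV[F]_k -> 'rV[F]_p) : islin phi ->
  forall x, x *m (\matrix_(i < k) phi (delta_mx 0 i)) = phi x.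
Proof.
move=> h x; rewrite mulmx_sum_row {2}[x]row_sum_delta (islin_sum h).
by apply: eq_bigr => i _; rewrite rowK (islinZ h).
Qed.

Lemma row_factor (F : fieldType) k n m (g : 'rV[F]_k -> 'M[F]_(n,m)) (b : 'rV_m) :
  islin g -> b != 0 -> (forall x, (g x <= b)%MS) ->
  exists K : 'M_(k,n), forall x, g x = (x *m K)^T *m b.
Proof.
move=> hg b0 gb; have [j0 bj0] := nz_entry b0.
pose phi x := (b 0 j0)^-1 *: (col j0 (g x))^T.
have hphi : islin phi.
  by move=> a x y; rewrite /phi hg linearD linearZ /= linearD linearZ /= scalerDr scalerA mulrC -scalerA.
exists (\matrix_(i < k) phi (delta_mx 0 i)) => x; rewrite linmx // /phi.
have /submxP [D eD] := gb x.
apply/matrixP => i j; rewrite eD !mxE !big_ord1 !mxE ?big_ord1 ?mxE.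
by rewrite [in RHS](mulrC (D i ord0)) mulrA (_ : ord0 = 0) // mulVf // mul1r.
Qed.

Lemma col_factor (F : fieldType) k n m (g : 'rV[F]_k -> 'M[F]_(n,m)) (a : 'rV_n) :
  islin g -> a != 0 -> (forall x, ((g x)^T <= a)%MS) ->
  exists H : 'M_(k,m), forall x, g x = a^T *m (x *m H).
Proof.
move=> hg a0 ga.
have hg' : islin (fun x => (g x)^T) by move=> c x y; rewrite hg linearD linearZ.
have [H eH] := row_factor hg' a0 ga.
by exists H => x; rewrite -[g x]trmxK eH trmx_mul trmxK.
Qed.

Lemma decomp_rows (F : fieldType) n m (M : 'M[F]_(n,m)) :
  M = \sum_(i < n) ('e_i)^T *m row i M.
Proof.
apply/matrixP => a b; rewrite summxE (bigD1 a) //= big1 ?addr0.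
  by rewrite !mxE big_ord1 !mxE !eqxx mul1r.
by move=> i ia; rewrite !mxE big_ord1 !mxE (eq_sym a i) (negbTE ia) andbF mul0r.
Qed.

Lemma rk1_nz (F : fieldType) n m (u : 'rV[F]_n) (x : 'rV[F]_m) :
  u != 0 -> x != 0 -> u^T *m x != 0.
Proof.
move=> /nz_entry [i ui] /nz_entry [j xj]; apply/negP => /eqP/matrixP/(_ i j).
rewrite !mxE big_ord1 !mxE => /eqP; apply/negP; exact: mulf_neq0.
Qed.

Lemma row_incl (F : fieldType) n m (f : 'M[F]_(n,m) -> 'M[F]_(n,m)) (B : 'M[F]_m) :
  islin f -> (forall (u : 'rV_n) (x : 'rV_m), (f (u^T *m x) <= x *m B)%MS) ->
  forall M, (f M <= M *m B)%MS.
Proof.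
move=> hf h M; rewrite {1}[M]decomp_rows (islin_sum hf) summx_sub // => i _.
by apply: submx_trans (h _ _) _; rewrite -row_mul row_sub.
Qed.

Lemma ei_nz (F : fieldType) n (i : 'I_n) : ('e_i : 'rV[F]_n) != 0.
Proof. by apply/negP => /eqP/matrixP/(_ 0 i); rewrite !mxE !eqxx /= => /eqP; rewrite oner_eq0. Qed.

Lemma rank_rk1 (F : fieldType) n m (u : 'rV[F]_n) (x : 'rV[F]_m) :
  (\rank (u^T *m x) <= 1)%N.
Proof. exact: leq_trans (mxrankM_maxr _ _) (rank_leq_row _). Qed.

Lemma core_lemma (F : finFieldType) n m (f : 'M[F]_(n,m) -> 'M[F]_(n,m)) :
  (2 <= n)%N -> (2 <= m)%N -> islin f -> (forall M, \rank (f M) = \rank M) ->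
  (forall u : 'rV_n, exists a : 'rV_n, forall x : 'rV_m, ((f (u^T *m x))^T <= a)%MS) ->
  exists2 A : 'M_n, A \in unitmx & forall (u : 'rV_n) (x : 'rV_m), ((f (u^T *m x))^T <= u *m A)%MS.
Proof.
move=> n2 m2 hf hr hcol.
have f0 := islin0 hf.
have fnz M : M != 0 -> f M != 0 by rewrite -!mxrank_eq0 hr.
have m0 : (0 < m)%N by apply: leq_trans m2.
have n0 : (0 < n)%N by apply: leq_trans n2.
pose w0 : 'rV[F]_m := 'e_(Ordinal m0).
pose u0 : 'rV[F]_n := 'e_(Ordinal n0).
have w0n : w0 != 0.
  by apply/negP => /eqP/matrixP/(_ 0 (Ordinal m0)); rewrite !mxE !eqxx /= => /eqP; rewrite oner_eq0.
have u0n : u0 != 0.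
  by apply/negP => /eqP/matrixP/(_ 0 (Ordinal n0)); rewrite !mxE !eqxx /= => /eqP; rewrite oner_eq0.
pose H u := f (u^T *m w0).
have hH : islin H by move=> a u v; rewrite /H linearD linearZ /= mulmxDl -scalemxAl hf.
have Hnz u : u != 0 -> H u != 0 by move=> un; apply: fnz; apply: rk1_nz.
have key u : u != 0 -> forall c : 'rV_n, ((H u)^T <= c)%MS -> forall x, ((f (u^T *m x))^T <= c)%MS.
  move=> un c hc x; have [a ha] := hcol u.
  apply: submx_trans (ha x) _; apply: submx_trans hc.
  by apply: line_sub (ha _); rewrite trmx_eq0 Hnz.
have Hr1 u : (\rank (H u) <= 1)%N by rewrite /H hr rank_rk1.
have [[c c0 hc]|[b b0 hb]] := rank1_family (islinD hH) Hr1 (Hnz _ u0n).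
  exfalso.
  have all_c M : ((f M)^T <= c)%MS.
    rewrite {1}[M]decomp_rows (islin_sum hf) linear_sum summx_sub // => i _.
    exact: (key _ (ei_nz _ _) _ (hc _)).
  have := mxrankS (all_c (pid_mx 2)); rewrite mxrank_tr hr rank_pid_mx //.
  by move=> h; have := leq_trans h (rank_leq_row c).
have [K eK] := row_factor hH b0 hb.
have Ku : K \in unitmx.
  rewrite -row_free_unit; apply: row_freeK => u uK.
  have [//|un] := eqVneq u 0.
  by move: (Hnz u un); rewrite eK uK trmx0 mul0mx eqxx.
exists K => // u x.
have [->|un] := eqVneq u 0; first by rewrite trmx0 mul0mx f0 trmx0 sub0mx.
apply: key => //; by rewrite eK trmx_mul trmxK submxMl.
Qed.

Lemma core2 (F : finFieldType) n m (f : 'M[F]_(n,m) -> 'M[F]_(n,m)) (A : 'M[F]_n) :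
  (2 <= n)%N -> islin f -> (forall M, \rank (f M) = \rank M) -> A \in unitmx ->
  (forall (u : 'rV_n) (x : 'rV_m), ((f (u^T *m x))^T <= u *m A)%MS) ->
  forall x : 'rV_m, exists b : 'rV_m, forall u : 'rV_n, (f (u^T *m x) <= b)%MS.
Proof.
move=> n2 hf hr Au hA x.
have f0 := islin0 hf.
have fnz M : M != 0 -> f M != 0 by rewrite -!mxrank_eq0 hr.
have n0 : (0 < n)%N by apply: leq_trans n2.
have [->|xn] := eqVneq x 0.
  by exists 0; move=> u; rewrite mulmx0 f0 sub0mx.
pose G u := f (u^T *m x).
have hG : islin G by move=> a u v; rewrite /G linearD linearZ /= mulmxDl -scalemxAl hf.
have Gnz u : u != 0 -> G u != 0 by move=> un; apply: fnz; apply: rk1_nz.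
have Gr1 u : (\rank (G u) <= 1)%N by rewrite /G hr rank_rk1.
have [[c c0 hc]|[b b0 hb]] := rank1_family (islinD hG) Gr1 (Gnz _ (ei_nz F (Ordinal n0))); last first.
  by exists b.
exfalso.
have Ac : (A <= c)%MS.
  apply/row_subP => i; rewrite rowE.
  apply: submx_trans (hc 'e_i); apply: line_sub (hA _ _).
  by rewrite trmx_eq0 Gnz // ei_nz.
have := mxrankS Ac; rewrite mxrank_unit // => h.
by have := leq_trans n2 (leq_trans h (rank_leq_row c)).
Qed.

Definition ftr (F : fieldType) n m (f : 'M[F]_(n,m) -> 'M[F]_(n,m)) : 'M[F]_(m,n) -> 'M[F]_(m,n) :=
  fun M => (f M^T)^T.

Lemma ftr_lin (F : fieldType) n m (f : 'M[F]_(n,m) -> 'M[F]_(n,m)) : islin f -> islin (ftr f).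
Proof. by move=> hf a x y; rewrite /ftr linearD linearZ /= hf linearD linearZ. Qed.

Lemma ftr_rank (F : fieldType) n m (f : 'M[F]_(n,m) -> 'M[F]_(n,m)) :
  (forall M, \rank (f M) = \rank M) -> forall M, \rank (ftr f M) = \rank M.
Proof. by move=> hr M; rewrite /ftr mxrank_tr hr mxrank_tr. Qed.

Lemma ftr_rk1 (F : fieldType) n m (f : 'M[F]_(n,m) -> 'M[F]_(n,m)) (u : 'rV_n) (x : 'rV_m) :
  ftr f (x^T *m u) = (f (u^T *m x))^T.
Proof. by rewrite /ftr trmx_mul trmxK. Qed.

Lemma structure (F : finFieldType) n m (f : 'M[F]_(n,m) -> 'M[F]_(n,m)) :
  (2 <= n)%N -> (2 <= m)%N -> islin f -> (forall M, \rank (f M) = \rank M) ->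
  (forall u : 'rV_n, exists a : 'rV_n, forall x : 'rV_m, ((f (u^T *m x))^T <= a)%MS) ->
  (exists2 A : 'M_n, A \in unitmx & forall M, ((f M)^T <= M^T *m A)%MS) /\
  (exists2 B : 'M_m, B \in unitmx & forall M, (f M <= M *m B)%MS).
Proof.
move=> n2 m2 hf hr hcol.
have [A Au hA] := core_lemma n2 m2 hf hr hcol.
have hrow := core2 n2 hf hr Au hA.
have [B Bu hB] : exists2 B : 'M_m, B \in unitmx &
    forall (x : 'rV_m) (u : 'rV_n), ((ftr f (x^T *m u))^T <= x *m B)%MS.
  apply: core_lemma => //; first exact: ftr_lin.
    exact: ftr_rank.
  move=> x; have [b hb] := hrow x; exists b => u.
  by rewrite ftr_rk1 trmxK.
split.
  exists A => // M; have := row_incl (ftr_lin hf) (B := A) _ M^T.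
  rewrite /ftr trmxK; apply => u x.
  by have := hA x u; rewrite /ftr trmx_mul trmxK.
exists B => //; apply: row_incl hf _ => u x.
by have := hB x u; rewrite ftr_rk1 trmxK.
Qed.

Lemma mem_subsp (F : finFieldType) p q (P : pred 'M[F]_(p,q)) :
  P 0 -> (forall a x y, P x -> P y -> P (a *: x + y)) ->
  forall x, (x \in subsp_of (@id 'M[F]_(p,q)) P) = P x.
Proof.
move=> P0 PC x; apply/idP/idP.
  move/(@coord_span _ _ _ (in_tuple _)) => ->.
  apply: (big_ind P) => //.
    by move=> y z Py Pz; rewrite -[y]scale1r; apply: PC.
  move=> i _; rewrite -[_ *: _]addr0; apply: PC => //.
  have sP y : y \in [seq id x | x <- enum 'M[F]_(p,q) & P x] -> P y.
    by rewrite map_id mem_filter => /andP [].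
  by apply: sP; apply: mem_nth; apply: ltn_ord.
by move=> Px; apply: memv_span; rewrite map_id mem_filter Px mem_enum.
Qed.

Lemma rV_eq0 (F : fieldType) m (v : 'rV[F]_m) : (v == 0) = [forall j, v 0 j == 0].
Proof.
apply/eqP/forallP => [-> j|h]; first by rewrite mxE.
by apply/matrixP => i j; rewrite ord1 mxE; apply/eqP.
Qed.

Lemma cV_eq0 (F : fieldType) m (v : 'cV[F]_m) : (v == 0) = [forall i, v i 0 == 0].
Proof.
apply/eqP/forallP => [-> j|h]; first by rewrite mxE.
by apply/matrixP => i j; rewrite ord1 mxE; apply/eqP.
Qed.

Lemma mem_perp (F : finFieldType) N (J : {vspace 'rV[F]_N}) x :
  (x \in perp J) = [forall y, (y \in J) ==> (dotv x y == 0)].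
Proof.
rewrite /perp mem_subsp //.
  by apply/forallP => y; apply/implyP => _; rewrite /dotv big1 // => i _; rewrite mxE mul0r.
move=> a u v /forallP hu /forallP hv; apply/forallP => y; apply/implyP => yJ.
move: (hu y) (hv y); rewrite yJ /= => /eqP hu' /eqP hv'.
rewrite /dotv; under eq_bigr do rewrite !mxE mulrDl -mulrA.
by rewrite big_split /= -mulr_sumr; rewrite /dotv in hu' hv'; rewrite hu' hv' mulr0 addr0.
Qed.

Lemma dotv_col (F : finFieldType) n m (M : 'M[F]_(n,m)) j y :
  dotv (col j M)^T y = (y *m M) 0 j.
Proof. by rewrite /dotv !mxE; apply: eq_bigr => i _; rewrite !mxE mulrC. Qed.

Lemma dotv_row (F : finFieldType) n m (M : 'M[F]_(n,m)) i z :
  dotv (row i M) z = (M *m z^T) i 0.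
Proof. by rewrite /dotv !mxE; apply: eq_bigr => j _; rewrite !mxE. Qed.

Lemma memc (F : finFieldType) n m (C : {vspace 'M[F]_(n,m)}) J M :
  (M \in subcode_c C (perp J)) = (M \in C) && [forall y, (y \in J) ==> (y *m M == 0)].
Proof.
have colE M' : colsp_sub M' (perp J) = [forall y, (y \in J) ==> (y *m M' == 0)].
  apply/forallP/forallP => h y.
    apply/implyP => yJ; rewrite rV_eq0; apply/forallP => j.
    by move: (h j); rewrite mem_perp => /forallP/(_ y); rewrite yJ dotv_col.
  rewrite mem_perp; apply/forallP => z; apply/implyP => zJ.
  by move: (h z); rewrite zJ rV_eq0 dotv_col => /forallP.
rewrite /subcode_c mem_subsp; first by rewrite colE.
  by rewrite mem0v /= colE; apply/forallP => y; rewrite mulmx0 eqxx implybT.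
move=> a X Y /andP [XC hX] /andP [YC hY]; rewrite memvD ?memvZ // andTb.
rewrite colE in hX; rewrite colE in hY; rewrite colE.
apply/forallP => y; apply/implyP => yJ.
move: hX hY => /forallP/(_ y) /implyP/(_ yJ)/eqP hX /forallP/(_ y) /implyP/(_ yJ)/eqP hY.
by rewrite mulmxDr -scalemxAr hX hY scaler0 addr0.
Qed.

Lemma memr (F : finFieldType) n m (C : {vspace 'M[F]_(n,m)}) K M :
  (M \in subcode_r C (perp K)) = (M \in C) && [forall z, (z \in K) ==> (M *m z^T == 0)].
Proof.
have rowE' M' : rowsp_sub M' (perp K) = [forall z, (z \in K) ==> (M' *m z^T == 0)].
  apply/forallP/forallP => h z.
    apply/implyP => zK; rewrite cV_eq0; apply/forallP => i.
    by move: (h i); rewrite mem_perp => /forallP/(_ z); rewrite zK dotv_row.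
  rewrite mem_perp; apply/forallP => y; apply/implyP => yK.
  by move: (h y); rewrite yK cV_eq0 dotv_row => /forallP.
rewrite /subcode_r mem_subsp; first by rewrite rowE'.
  by rewrite mem0v /= rowE'; apply/forallP => y; rewrite mul0mx eqxx implybT.
move=> a X Y /andP [XC hX] /andP [YC hY]; rewrite memvD ?memvZ // andTb.
rewrite rowE' in hX; rewrite rowE' in hY; rewrite rowE'.
apply/forallP => y; apply/implyP => yJ.
move: hX hY => /forallP/(_ y) /implyP/(_ yJ)/eqP hX /forallP/(_ y) /implyP/(_ yJ)/eqP hY.
by rewrite mulmxDl -scalemxAl hX hY scaler0 addr0.
Qed.

Lemma dim_transfer (F : finFieldType) n m (f : {linear 'M[F]_(n,m) -> 'M[F]_(n,m)})
  (C1 C2 S1 S2 : {vspace 'M[F]_(n,m)}) (P1 P2 : pred 'M[F]_(n,m)) :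
  injective f -> (linfun f @: C1)%VS = C2 ->
  (forall M, (M \in S1) = (M \in C1) && P1 M) ->
  (forall M, (M \in S2) = (M \in C2) && P2 M) ->
  (forall M, P2 (f M) = P1 M) -> \dim S2 = \dim S1.
Proof.
move=> inj eC h1 h2 hP.
have inj' : injective (linfun f) by move=> x y; rewrite !lfunE; apply: inj.
have eS : (linfun f @: S1)%VS = S2.
  apply/vspaceP => N; rewrite h2; apply/memv_imgP/andP.
    case=> M; rewrite h1 => /andP [MC PM] ->; rewrite lfunE hP PM; split=> //.
    by rewrite -eC; have := memv_img (linfun f) MC; rewrite lfunE.
  case=> NC PN; move: NC; rewrite -eC => /memv_imgP [M MC eN]; exists M => //.
  by rewrite h1 MC -hP -(lfunE f M) -eN PN.
by rewrite -eS limg_dim_eq // (eqP (introT lker0P inj')) capv0.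
Qed.

Lemma dim_code (F : finFieldType) n m (f : {linear 'M[F]_(n,m) -> 'M[F]_(n,m)})
  (C1 C2 : {vspace 'M[F]_(n,m)}) :
  injective f -> (linfun f @: C1)%VS = C2 -> \dim C2 = \dim C1.
Proof.
move=> inj eC.
have inj' : injective (linfun f) by move=> x y; rewrite !lfunE; apply: inj.
by rewrite -eC limg_dim_eq // (eqP (introT lker0P inj')) capv0.
Qed.

Lemma forall_img (F : finFieldType) N (X : 'M[F]_N) (J : {vspace 'rV[F]_N}) (Q : pred 'rV[F]_N) :
  [forall y, (y \in (linfun (mulmxr X) @: J)%VS) ==> Q y] =
  [forall y, (y \in J) ==> Q (y *m X)].
Proof.
apply/forallP/forallP => h y; apply/implyP => yJ.
  by have := h (y *m X); rewrite (_ : y *m X \in _) //; have := memv_img (linfun (mulmxr X)) yJ; rewrite lfunE.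
by move/memv_imgP: yJ => [z zJ ->]; rewrite lfunE /=; exact: (implyP (h z) zJ).
Qed.

Lemma bij_mulmxr (F : fieldType) N (X : 'M[F]_N) : X \in unitmx -> bijective (@mulmxr _ 1 N N X).
Proof.
move=> Xu; exists (mulmxr (invmx X)) => y /=; first by rewrite mulmxK.
by rewrite mulmxKV.
Qed.

Lemma pm_cc (F : finFieldType) n m (f : {linear 'M[F]_(n,m) -> 'M[F]_(n,m)})
  (C1 C2 : {vspace 'M[F]_(n,m)}) (A : 'M[F]_n) :
  injective f -> (linfun f @: C1)%VS = C2 -> A \in unitmx ->
  (forall M (y : 'rV_n), (y *m f M == 0) = (y *m A *m M == 0)) ->
  pm_equiv (rho_c C1) (rho_c C2).
Proof.
move=> inj eC Au hA; exists (mulmxr (invmx A)); split.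
  by apply: bij_mulmxr; rewrite unitmx_inv.
move=> J; rewrite /rho_c (dim_code inj eC).
rewrite (dim_transfer (P1 := fun M => [forall y, (y \in J) ==> (y *m M == 0)])
   (P2 := fun M => [forall y, (y \in (linfun (mulmxr (invmx A)) @: J)%VS) ==> (y *m M == 0)])
   inj eC (fun M => memc _ _ _) (fun M => memc _ _ _)) //.
move=> M /=; rewrite forall_img; apply: eq_forallb => y.
by rewrite hA mulmxKV.
Qed.

Lemma pm_rr (F : finFieldType) n m (f : {linear 'M[F]_(n,m) -> 'M[F]_(n,m)})
  (C1 C2 : {vspace 'M[F]_(n,m)}) (B : 'M[F]_m) :
  injective f -> (linfun f @: C1)%VS = C2 -> B \in unitmx ->
  (forall M (z : 'rV_m), (f M *m z^T == 0) = (M *m (z *m B)^T == 0)) ->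
  pm_equiv (rho_r C1) (rho_r C2).
Proof.
move=> inj eC Bu hB; exists (mulmxr (invmx B)); split.
  by apply: bij_mulmxr; rewrite unitmx_inv.
move=> J; rewrite /rho_r (dim_code inj eC).
rewrite (dim_transfer (P1 := fun M => [forall y, (y \in J) ==> (M *m y^T == 0)])
   (P2 := fun M => [forall y, (y \in (linfun (mulmxr (invmx B)) @: J)%VS) ==> (M *m y^T == 0)])
   inj eC (fun M => memr _ _ _) (fun M => memr _ _ _)) //.
move=> M /=; rewrite forall_img; apply: eq_forallb => y.
by rewrite hB mulmxKV.
Qed.

Lemma pm_cr (F : finFieldType) n (f : {linear 'M[F]_(n,n) -> 'M[F]_(n,n)})
  (C1 C2 : {vspace 'M[F]_(n,n)}) (A : 'M[F]_n) :
  injective f -> (linfun f @: C1)%VS = C2 -> A \in unitmx ->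
  (forall M (z : 'rV_n), (f M *m z^T == 0) = (z *m A *m M == 0)) ->
  pm_equiv (rho_c C1) (rho_r C2).
Proof.
move=> inj eC Au hA; exists (mulmxr (invmx A)); split.
  by apply: bij_mulmxr; rewrite unitmx_inv.
move=> J; rewrite /rho_c /rho_r (dim_code inj eC).
rewrite (dim_transfer (P1 := fun M => [forall y, (y \in J) ==> (y *m M == 0)])
   (P2 := fun M => [forall y, (y \in (linfun (mulmxr (invmx A)) @: J)%VS) ==> (M *m y^T == 0)])
   inj eC (fun M => memc _ _ _) (fun M => memr _ _ _)) //.
move=> M /=; rewrite forall_img; apply: eq_forallb => y.
by rewrite hA mulmxKV.
Qed.

Lemma pm_rc (F : finFieldType) n (f : {linear 'M[F]_(n,n) -> 'M[F]_(n,n)})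
  (C1 C2 : {vspace 'M[F]_(n,n)}) (B : 'M[F]_n) :
  injective f -> (linfun f @: C1)%VS = C2 -> B \in unitmx ->
  (forall M (y : 'rV_n), (y *m f M == 0) = (M *m (y *m B)^T == 0)) ->
  pm_equiv (rho_r C1) (rho_c C2).
Proof.
move=> inj eC Bu hB; exists (mulmxr (invmx B)); split.
  by apply: bij_mulmxr; rewrite unitmx_inv.
move=> J; rewrite /rho_c /rho_r (dim_code inj eC).
rewrite (dim_transfer (P1 := fun M => [forall y, (y \in J) ==> (M *m y^T == 0)])
   (P2 := fun M => [forall y, (y \in (linfun (mulmxr (invmx B)) @: J)%VS) ==> (y *m M == 0)])
   inj eC (fun M => memr _ _ _) (fun M => memc _ _ _)) //.
move=> M /=; rewrite forall_img; apply: eq_forallb => y.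
by rewrite hB mulmxKV.
Qed.

Lemma eq_ann (F : fieldType) p p' q r (X : 'M[F]_(p,q)) (Y : 'M[F]_(p',q)) (v : 'M[F]_(q,r)) :
  (X <= Y)%MS -> \rank X = \rank Y -> (X *m v == 0) = (Y *m v == 0).
Proof.
move=> XY rXY; have YX : (Y <= X)%MS by rewrite -(mxrank_leqif_sup XY).2 rXY.
have [D eX] := submxP XY; have [E eY] := submxP YX.
by apply/eqP/eqP => h; [rewrite eY | rewrite eX]; rewrite -mulmxA h mulmx0.
Qed.

Lemma ann_col (F : fieldType) n m (f : 'M[F]_(n,m) -> 'M[F]_(n,m)) (A : 'M[F]_n) M (y : 'rV_n) :
  (forall M, \rank (f M) = \rank M) -> A \in unitmx -> ((f M)^T <= M^T *m A)%MS ->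
  (y *m f M == 0) = (y *m A^T *m M == 0).
Proof.
move=> hr Au h.
rewrite -trmx_eq0 trmx_mul (eq_ann _ h) ?mxrank_tr ?hr ?mxrankMfree ?mxrank_tr ?row_free_unit //.
by rewrite -[RHS]trmx_eq0 !trmx_mul trmxK mulmxA.
Qed.

Lemma ann_row (F : fieldType) n m (f : 'M[F]_(n,m) -> 'M[F]_(n,m)) (B : 'M[F]_m) M (z : 'rV_m) :
  (forall M, \rank (f M) = \rank M) -> B \in unitmx -> (f M <= M *m B)%MS ->
  (f M *m z^T == 0) = (M *m (z *m B^T)^T == 0).
Proof.
move=> hr Bu h.
rewrite (eq_ann _ h) ?hr ?mxrankMfree ?row_free_unit //.
by rewrite trmx_mul trmxK mulmxA.
Qed.

Lemma square_types (F : finFieldType) n (f : 'M[F]_n -> 'M[F]_n) :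
  (2 <= n)%N -> islin f -> (forall M, \rank (f M) = \rank M) ->
  (forall u : 'rV_n, exists a : 'rV_n, forall x : 'rV_n, ((f (u^T *m x))^T <= a)%MS) \/
  (forall u : 'rV_n, exists b : 'rV_n, forall x : 'rV_n, (f (u^T *m x) <= b)%MS).
Proof.
move=> n2 hf hr.
have f0 := islin0 hf.
have fnz M : M != 0 -> f M != 0 by rewrite -!mxrank_eq0 hr.
have finj M N : f M = f N -> M = N.
  move=> e; apply/eqP; rewrite -subr_eq0 -mxrank_eq0 -hr.
  by rewrite (islinD hf) (islinN hf) e subrr mxrank0.
have n0 : (0 < n)%N by apply: leq_trans n2.
pose w0 : 'rV[F]_n := 'e_(Ordinal n0).
have w0n : w0 != 0 by apply: ei_nz.
pose G (u x : 'rV[F]_n) := f (u^T *m x).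
have hG u : islin (G u) by move=> a x y; rewrite /G mulmxDr -scalemxAr hf.
have Gnz u x : u != 0 -> x != 0 -> G u x != 0 by move=> un xn; apply: fnz; apply: rk1_nz.
have Gr1 u x : (\rank (G u x) <= 1)%N by rewrite /G hr rank_rk1.
case: (boolP [forall u : 'rV[F]_n, [exists a : 'rV[F]_n, [forall x : 'rV[F]_n, ((f (u^T *m x))^T <= a)%MS]]]) => [h|/forallPn [u1 hu1]].
  left => u; have /existsP [a /forallP ha] := forallP h u; by exists a.
right => u.
have u1n : u1 != 0.
  apply: contraNneq hu1 => ->; apply/existsP; exists 0; apply/forallP => x.
  by rewrite trmx0 mul0mx f0 trmx0 sub0mx.
have [[a1 _ ha1]|[b1 b1n hb1]] := rank1_family (islinD (hG u1)) (Gr1 u1) (Gnz _ _ u1n w0n).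
  by move: hu1; rewrite negb_exists => /forallP/(_ a1); rewrite negb_forall => /existsP [x /negP]; case; apply: ha1.
have [K1 eK1] := row_factor (hG u1) b1n hb1.
have K1u : K1 \in unitmx.
  rewrite -row_free_unit; apply: row_freeK => x xK.
  have [//|xn] := eqVneq x 0.
  by move: (Gnz _ _ u1n xn); rewrite eK1 xK trmx0 mul0mx eqxx.
have [->|un] := eqVneq u 0.
  by exists 0 => x; rewrite trmx0 mul0mx f0 sub0mx.
have [[a an ha]|[b _ hb]] := rank1_family (islinD (hG u)) (Gr1 u) (Gnz _ _ un w0n); last by exists b.
exfalso.
have [H eH] := col_factor (hG u) an ha.
have Hu : H \in unitmx.
  rewrite -row_free_unit; apply: row_freeK => x xH.
  have [//|xn] := eqVneq x 0.
  by move: (Gnz _ _ un xn); rewrite eH xH mulmx0 eqxx.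
pose x1 := b1 *m invmx H; pose x2 := a *m invmx K1.
have e12 : u^T *m x1 = u1^T *m x2.
  apply: finj; have := eH x1; have := eK1 x2; rewrite /G => -> ->.
  by rewrite /x1 /x2 !mulmxKV // trmxK.
have x2n : x2 != 0.
  by apply: contraNneq an => h; rewrite -(mulmxKV K1u a) -/x2 h mul0mx.
clearbody x1 x2.
have [j xj] := nz_entry x2n.
pose c := x1 0 j / x2 0 j.
have eu1 : u1 = c *: u.
  apply/matrixP => i k; rewrite ord1 mxE.
  have := congr1 (fun M : 'M[F]_n => M k j) e12; rewrite !mxE !big_ord1 !mxE => e.
  by rewrite /c mulrAC [x1 0 j * _]mulrC e mulfK.
move/negP: hu1; apply; apply/existsP; exists a; apply/forallP => x.
by rewrite eu1 linearZ /= -scalemxAl scalemxAr; apply: ha.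
Qed.

Theorem proposition5p7 (F : finFieldType) (n m : nat)
    (C1 C2 : {vspace 'M[F]_(n, m)}) :
  (2 <= n)%N -> (n <= m)%N -> code_equiv C1 C2 ->
  ((n < m)%N ->
     pm_equiv (rho_c C1) (rho_c C2) /\ pm_equiv (rho_r C1) (rho_r C2)) /\
  (n = m ->
     (pm_equiv (rho_c C1) (rho_c C2) /\ pm_equiv (rho_r C1) (rho_r C2)) \/
     (pm_equiv (rho_c C1) (rho_r C2) /\ pm_equiv (rho_r C1) (rho_c C2))).
Proof.
move=> n2 nm [f [hiso eC]].
have hr M : \rank (f M) = \rank M by have := hiso M 0; rewrite linear0 !subr0.
have hf : islin f by move=> a x y; rewrite linearP.
have finj : injective f.
  by move=> M N e; apply/eqP; rewrite -subr_eq0 -mxrank_eq0 -hiso e subrr mxrank0.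
have m2 : (2 <= m)%N := leq_trans n2 nm.
have colcase : (forall u : 'rV_n, exists a : 'rV_n, forall x : 'rV_m,
      ((f (u^T *m x))^T <= a)%MS) ->
    pm_equiv (rho_c C1) (rho_c C2) /\ pm_equiv (rho_r C1) (rho_r C2).
  move=> hcol; have [[A Au hA] [B Bu hB]] := structure n2 m2 hf hr hcol.
  split.
    apply: (pm_cc finj eC (A := A^T)); first by rewrite unitmx_tr.
    by move=> M y; apply: ann_col.
  apply: (pm_rr finj eC (B := B^T)); first by rewrite unitmx_tr.
  by move=> M z; apply: ann_row.
split.
  move=> ltnm; apply: colcase => u.
  have [->|un] := eqVneq u 0.
    by exists 0; move=> x; rewrite trmx0 mul0mx linear0 trmx0 sub0mx.
  pose G x := f (u^T *m x).
  have hG : islin G by move=> a x y; rewrite /G mulmxDr -scalemxAr hf.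
  have m0 : (0 < m)%N by apply: leq_trans m2.
  have Gnz x : x != 0 -> G x != 0.
    by move=> xn; rewrite -mxrank_eq0 /G hr mxrank_eq0 rk1_nz.
  have Gr1 x : (\rank (G x) <= 1)%N by rewrite /G hr rank_rk1.
  have [[a _ ha]|[b bn hb]] := rank1_family (islinD hG) Gr1 (Gnz _ (ei_nz F (Ordinal m0))).
    by exists a.
  exfalso; have [K eK] := row_factor hG bn hb.
  have : row_free K.
    apply: row_freeK => x xK; have [//|xn] := eqVneq x 0.
    by move: (Gnz _ xn); rewrite eK xK trmx0 mul0mx eqxx.
  move/eqP => rK; have := rank_leq_col K; rewrite rK => h.
  by have := leq_ltn_trans h ltnm; rewrite ltnn.
move=> enm; subst m.
have [hcol|hrow] := square_types n2 hf hr.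
  by left; apply: colcase.
right.
pose fT M := (f M)^T.
have hfT : islin fT by move=> a x y; rewrite /fT hf linearD linearZ.
have hrT M : \rank (fT M) = \rank M by rewrite /fT mxrank_tr hr.
have hcolT : forall u : 'rV_n, exists a : 'rV_n, forall x : 'rV_n,
    ((fT (u^T *m x))^T <= a)%MS.
  by move=> u; have [b hb] := hrow u; exists b; move=> x; rewrite /fT trmxK.
have [[A Au hA] [B Bu hB]] := structure n2 n2 hfT hrT hcolT.
split.
  apply: (pm_cr finj eC (A := A^T)); first by rewrite unitmx_tr.
  move=> M z; rewrite -(@ann_col _ _ _ fT A M z hrT Au (hA M)) /fT.
  by rewrite -[LHS]trmx_eq0 trmx_mul trmxK.
apply: (pm_rc finj eC (B := B^T)); first by rewrite unitmx_tr.
move=> M y; rewrite -(@ann_row _ _ _ fT B M y hrT Bu (hB M)) /fT.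
by rewrite -[LHS]trmx_eq0 trmx_mul.
Qed.
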